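(* Let $X$ be a real Hilbert space and let $G$ be a closed convex subset of $X$. Suppose there exist $\epsilon,K>0$ such that $\epsilon B_X\subset G\subset K B_X$. If $u,w\in\partial G$ and $\cos(u,w)=\theta>0$, then $$\|u-w\|^2\le K^2\Bigl(\frac{K^2}{\epsilon^2}+1\Bigr)\frac{1-\theta^2}{\theta^2}.$$
   Context: $B_X$ is the closed unit ball of $X$, $\partial G$ the boundary of $G$, and for nonzero $u,w\in X$, $\cos(u,w)=\frac{\langle u,w\rangle}{\|u\|\|w\|}$. *)

(* Defs.v *)
From HB Require Import structures.
From mathcomp Require Import all_boot all_order all_algebra.
From mathcomp Require Import all_classical all_reals all_analysis.
Set Implicit Arguments. Unset Strict Implicit. Unset Printing Implicit Defensive.
Import Order.TTheory GRing.Theory Num.Theory.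
Import numFieldNormedType.Exports.
Local Open Scope classical_set_scope.
Local Open Scope ring_scope.

Record hilbert_inner (R : realType) (V : completeNormedModType R) := HilbertInner {
  inner : V -> V -> R;
  inner_sym : forall x y, inner x y = inner y x;
  inner_linl : forall (a : R) (x y z : V), inner (a *: x + y) z = a * inner x z + inner y z;
  inner_norm : forall x, `|x| ^+ 2 = inner x x
}.

Definition cosv (R : realType) (V : completeNormedModType R) (ip : hilbert_inner V)
  (u w : V) : R := inner ip u w / (`|u| * `|w|).

Definition boundary (T : topologicalType) (A : set T) : set T :=
  closure A `\` interior A.

Definition rball (R : realType) (V : completeNormedModType R) (r : R) : set V :=
  [set x | `|x| <= r].

(* Main.v *)
Require Import Defs.
From HB Require Import structures.
From mathcomp Require Import all_boot all_order all_algebra.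
From mathcomp Require Import all_classical all_reals all_analysis.
From mathcomp Require Import ring lra.
Import Order.TTheory GRing.Theory Num.Theory.
Import numFieldNormedType.Exports.
Local Open Scope classical_set_scope.
Local Open Scope ring_scope.
Local Open Scope convex_scope.

Lemma inner_exp (R : realType) (V : completeNormedModType R) (ip : hilbert_inner V) (x y : V) (l : R) :
  `|x - l *: y| ^+ 2 = `|x| ^+ 2 - 2 * l * inner ip x y + l ^+ 2 * `|y| ^+ 2.
Proof.
have E : x - l *: y = (- l) *: y + x by rewrite scaleNr addrC.
have linr : forall z a p q, inner ip z (a *: p + q) = a * inner ip z p + inner ip z q.
  by move=> z a p q; rewrite inner_sym inner_linl (inner_sym ip p) (inner_sym ip q).
rewrite E (inner_norm ip) inner_linl !linr !(inner_norm ip) (inner_sym ip y x); ring.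
Qed.

Lemma key (R : realType) (V : completeNormedModType R) (G : set V) (eps l : R) (u w : V) :
  convex_set (G : set (convex_lmodType V)) -> rball eps `<=` G -> G w ->
  0 <= l -> l < 1 -> ~ interior G u -> (1 - l) * eps <= `|u - l *: w|.
Proof.
move=> cG sG Gw l0 l1 nu; rewrite leNgt; apply/negP => H; apply: nu.
rewrite /interior /=; apply/nbhs_ballP.
exists ((1 - l) * eps - `|u - l *: w|); first by rewrite /= subr_gt0.
move=> y; rewrite -ball_normE /ball_ /= => uy.
have l0' : 0 < 1 - l by rewrite subr_gt0.
pose z := (1 - l)^-1 *: (y - l *: w).
have Gz : G z.
  apply: sG; rewrite /rball /= /z normrZ gtr0_norm ?invr_gt0 //.
  rewrite -ler_pdivlMl // ?invr_gt0 // invrK mulrC.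
  have : `|y - l *: w| <= `|y - u| + `|u - l *: w|.
    by apply: ler_distD.
  rewrite (distrC y u). lra.
pose p := Itv01 l0 (ltW l1).
have := @cG w z p.
rewrite !inE => /(_ Gw Gz).
suff -> : ((w : convex_lmodType V) <| p |> (z : convex_lmodType V)) = y :> V by [].
change (l *: w + (1 - l) *: ((1 - l)^-1 *: (y - l *: w)) = y).
by rewrite scalerA divff ?gt_eqF // scale1r addrC subrK.
Qed.

Lemma alg (R : realType) (a b t e K m : R) : 0 < a -> a <= b -> b <= K -> 0 < e -> 0 < t -> t <= 1 ->
  m = 1 - t * a / b -> m ^+ 2 * e ^+ 2 <= a ^+ 2 * (1 - t ^+ 2) ->
  a ^+ 2 - 2 * (t * a * b) + b ^+ 2 <= K ^+ 2 * (K ^+ 2 / e ^+ 2 + 1) * ((1 - t ^+ 2) / t ^+ 2).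
Proof.
move=> a0 ab bK e0 t0 t1 -> H.
have b0 : 0 < b by lra.
set s := 1 - t ^+ 2.
have s0 : 0 <= s by rewrite /s subr_ge0 expr_le1 // ltW.
have -> : a ^+ 2 - 2 * (t * a * b) + b ^+ 2 = a ^+ 2 * s + (1 - t * a / b) ^+ 2 * b ^+ 2.
  rewrite /s; field; by rewrite gt_eqF.
set X := (1 - t * a / b) ^+ 2 in H *.
have HX : X <= a ^+ 2 * s / e ^+ 2 by rewrite ler_pdivlMr ?exprn_gt0.
have aK : a ^+ 2 <= K ^+ 2 by rewrite lerXn2r ?nnegrE; lra.
have bK2 : b ^+ 2 <= K ^+ 2 by rewrite lerXn2r ?nnegrE; lra.
have E0 : 0 < e ^+ 2 by rewrite exprn_gt0.
apply: (le_trans (y := K ^+ 2 * (K ^+ 2 / e ^+ 2 + 1) * s)).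
  have h1 : X * b ^+ 2 <= a ^+ 2 * s / e ^+ 2 * K ^+ 2.
    apply: ler_pM => //; first by rewrite /X sqr_ge0.
    by rewrite sqr_ge0.
  have h2 : a ^+ 2 * s / e ^+ 2 * K ^+ 2 <= K ^+ 2 * s / e ^+ 2 * K ^+ 2.
    apply: ler_wpM2r; first by rewrite sqr_ge0.
    apply: ler_wpM2r; first by rewrite invr_ge0 ltW.
    by apply: ler_wpM2r.
  have h3 : a ^+ 2 * s <= K ^+ 2 * s by apply: ler_wpM2r.
  have -> : K ^+ 2 * (K ^+ 2 / e ^+ 2 + 1) * s = K ^+ 2 * s / e ^+ 2 * K ^+ 2 + K ^+ 2 * s.
    by ring.
  lra.
apply: ler_wpM2l.
  by apply: mulr_ge0; [apply: sqr_ge0| apply: addr_ge0; [apply: divr_ge0; apply: sqr_ge0|]].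
rewrite ler_pdivlMr ?exprn_gt0 //.
apply: ler_piMr => //; by rewrite expr_le1 // ltW.

Qed.

Lemma main_le (R : realType) (V : completeNormedModType R) (ip : hilbert_inner V)
  (G : set V) (eps K : R) (u w : V) (theta : R) :
  convex_set (G : set (convex_lmodType V)) -> 0 < eps -> 
  rball eps `<=` G -> G w -> `|w| <= K -> ~ interior G u -> `|u| <= `|w| ->
  cosv ip u w = theta -> 0 < theta ->
  `|u - w| ^+ 2 <= K ^+ 2 * (K ^+ 2 / eps ^+ 2 + 1) * ((1 - theta ^+ 2) / theta ^+ 2).
Proof.
move=> cG e0 sG Gw wK nu ab; rewrite /cosv => cth t0.
set a := `|u| in ab cth *; set b := `|w| in ab wK cth *; set c := inner ip u w in cth.
have a0 : 0 < a.
  rewrite lt_neqAle normr_ge0 andbT; apply/eqP => a0.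
  by move: t0; rewrite -cth -a0 mul0r invr0 mulr0 ltxx.
have b0 : 0 < b by lra.
have ec : c = theta * a * b by rewrite -cth; field; rewrite ?gt_eqF // mulf_neq0 // gt_eqF.
pose l0 := theta * a / b.
have E1 : `|u - l0 *: w| ^+ 2 = a ^+ 2 * (1 - theta ^+ 2).
  rewrite (inner_exp _ _ ip) -/a -/b -/c ec /l0; field; by rewrite gt_eqF.
have s0 : 0 <= a ^+ 2 * (1 - theta ^+ 2) by rewrite -E1 sqr_ge0.
have t1 : theta <= 1.
  have : 0 <= 1 - theta ^+ 2 by rewrite -(pmulr_rge0 _ (exprn_gt0 2 a0)).
  by rewrite subr_ge0 expr_le1 // ltW.
have l01 : l0 <= 1.
  rewrite /l0 ler_pdivrMr // mul1r; apply: le_trans (ab).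
  by rewrite ler_piMl // ltW.
have l00 : 0 <= l0 by rewrite /l0; apply: divr_ge0; [apply: mulr_ge0; apply: ltW | apply: ltW].
have H : (1 - l0) ^+ 2 * eps ^+ 2 <= a ^+ 2 * (1 - theta ^+ 2).
  have [l1|l1] := ltP l0 1.
    have k := @key _ _ G eps l0 u w cG sG Gw l00 l1 nu.
    rewrite -E1 -exprMn lerXn2r // nnegrE ?normr_ge0 //.
    by apply: mulr_ge0; [rewrite subr_ge0 ltW | apply: ltW].
  have -> : l0 = 1 by apply/eqP; rewrite eq_le l01 l1.
  by rewrite subrr expr0n mul0r.
have -> : u - w = u - 1 *: w by rewrite scale1r.
rewrite (inner_exp _ _ ip) -/a -/b -/c ec expr1n mulr1 mul1r.
by apply: (@alg _ a b theta eps K (1 - l0)).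
Qed.

Theorem lemma4p4 (R : realType) (V : completeNormedModType R) (ip : hilbert_inner V)
  (G : set V) (eps K : R) (u w : V) (theta : R) :
  closed G -> convex_set (G : set (convex_lmodType V)) ->
  0 < eps -> 0 < K ->
  rball eps `<=` G -> G `<=` rball K ->
  boundary G u -> boundary G w ->
  cosv ip u w = theta -> 0 < theta ->
  `|u - w| ^+ 2 <= K ^+ 2 * (K ^+ 2 / eps ^+ 2 + 1) * ((1 - theta ^+ 2) / theta ^+ 2).
Proof.
move=> cl cG e0 K0 sG sK [cu nu] [cw nw] cth t0.
have ecl : closure G = G by apply/esym/closure_id.
rewrite ecl in cu cw.
have [uw|wu] := leP `|u| `|w|.
  exact: main_le cG e0 sG cw (sK _ cw) nu uw cth t0.
rewrite distrC; apply: (@main_le _ _ ip G eps K w u theta) cG e0 sG cu (sK _ cu) nw (ltW wu) _ t0.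
by rewrite -cth /cosv (inner_sym ip w u) (mulrC `|w|).
Qed.
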